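(* Let $p>3$ be a prime. Then $$\left(\tfrac{p-1}{2}\right)!!\prod_{\substack{i,j=1\\ p\nmid 2i+j}}^{(p-1)/2}(2i+j)\ \equiv\ \left(\frac{-2}{p}\right)\left(\tfrac{p-3}{2}\right)!!\prod_{\substack{i,j=1\\ p\nmid 2i-j}}^{(p-1)/2}(2i-j)\ \equiv\ \pm1\pmod p.$$
   Context: For a positive integer $n$, $n!!=\prod_{k=0}^{\lfloor(n-1)/2\rfloor}(n-2k)$, and $0!!=1$. $\left(\frac{\cdot}{p}\right)$ denotes the Legendre symbol. *)

(* Defs.v *)
From HB Require Import structures.
From mathcomp Require Import all_boot all_order all_algebra.
Set Implicit Arguments. Unset Strict Implicit. Unset Printing Implicit Defensive.
Import Order.TTheory GRing.Theory Num.Theory.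

Fixpoint dfact (n : nat) : nat :=
  match n with
  | 0 => 1
  | 1 => 1
  | (m.+2) as k => k * dfact m
  end.

Definition legendre (a : int) (p : nat) : int :=
  (
  if (p%:Z %| a)%Z then 0
  else if [exists x : 'I_p, ((x%:Z) ^+ 2 == a %[mod p%:Z])%Z] then 1 else -1)%R.

(* Main.v *)
Require Import Defs.
From HB Require Import structures.
From mathcomp Require Import all_boot all_order all_algebra all_field.
From mathcomp Require Import zify ring.
Import Order.TTheory GRing.Theory Num.Theory.
Local Open Scope ring_scope.

Lemma dfactSS n : dfact n.+2 = (n.+2 * dfact n)%N. Proof. by []. Qed.

Lemma dfact_fact n : (dfact n.+1 * dfact n = n.+1`!)%N.
Proof. elim: n => [//|n IH]. rewrite dfactSS factS -IH. ring. Qed.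

Lemma dfact_add n m : dfact (n + 2 * m) = (dfact n * \prod_(1 <= i < m.+1) (n + 2 * i))%N.
Proof.
elim: m => [|m IH]; first by rewrite muln0 addn0 big_geq // muln1.
rewrite big_nat_recr //= mulnA -IH.
have -> : (n + 2 * m.+1 = (n + 2 * m).+2)%N by lia.
by rewrite dfactSS mulnC.
Qed.

Lemma dfact_even m : dfact (2 * m) = (2 ^ m * m`!)%N.
Proof.
elim: m => [//|m IH].
rewrite (_ : 2 * m.+1 = (2 * m).+2)%N; last by lia.
rewrite dfactSS IH factS expnS; ring.
Qed.

Section Main.
Variable p : nat.
Hypothesis hp : prime p.
Local Notation F := ('F_p).

Lemma Fp_nat0 n : ((n%:R : F) == 0) = (p %| n)%N.
Proof. by rewrite -(inj_eq val_inj) /= val_Fp_nat. Qed.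

Lemma Fp_int0 z : ((z%:~R : F) == 0) = (p%:Z %| z)%Z.
Proof.
case: z => n; first by rewrite dvdzE /= -Fp_nat0.
by rewrite NegzE mulrNz oppr_eq0 dvdzE /= -Fp_nat0.
Qed.

Lemma eqmodF a b : (a = b %[mod p%:Z])%Z <-> (a%:~R : F) = b%:~R.
Proof.
split => [H|H].
  apply/eqP; rewrite -subr_eq0 -rmorphB /= Fp_int0 -eqz_mod_dvd; exact/eqP.
apply/eqP; rewrite eqz_mod_dvd -Fp_int0 rmorphB /= H subrr //.
Qed.

Definition cz (x : F) := if x == 0 then 1 else x.

Lemma improd r (f : nat -> int) : ((\prod_(j <- r | ~~ (p%:Z %| f j)%Z) f j)%:~R : F) = \prod_(j <- r) cz ((f j)%:~R).
Proof.
rewrite rmorph_prod big_mkcond /=; apply: eq_bigr => j _; rewrite /cz Fp_int0.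
by case: (p%:Z %| f j)%Z.
Qed.


Lemma cz_neq0 x : cz x != 0.
Proof. rewrite /cz; have [_|//] := eqVneq x 0; exact: oner_neq0. Qed.

Definition T n := \prod_(1 <= k < n.+1) cz (k%:R : F).

Lemma T_neq0 n : T n != 0.
Proof. by rewrite /T; elim/big_rec: _ => [|i x _ Hx]; rewrite ?oner_neq0 // mulf_neq0 ?cz_neq0. Qed.

Lemma T0 : T 0 = 1. Proof. by rewrite /T big_geq. Qed.

Lemma TS n : T n.+1 = T n * cz (n.+1%:R).
Proof. by rewrite /T big_nat_recr. Qed.

Lemma T_split a b : T a * \prod_(1 <= j < b.+1) cz ((a + j)%:R) = T (a + b).
Proof.
elim: b => [|b IH]; first by rewrite big_geq // mulr1 addn0.
by rewrite big_nat_recr //= mulrA IH addnS TS.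
Qed.

Lemma T_ratio a b : \prod_(1 <= j < b.+1) cz ((a + j)%:R) = T (a + b) / T a.
Proof. by rewrite -T_split [T a * _]mulrC mulfK // T_neq0. Qed.

Lemma cz_nat n : (0 < n < p)%N -> cz (n%:R) = n%:R.
Proof.
move=> /andP[n0 np]; rewrite /cz Fp_nat0.
by rewrite gtnNdvd.
Qed.

Lemma T_fact n : (n < p)%N -> T n = n`!%:R.
Proof.
elim: n => [|n IH] Hn; first by rewrite T0.
rewrite TS IH ?(ltnW Hn) // cz_nat ?Hn // factS natrM; exact: mulrC.
Qed.

Lemma T_pm1 : T p.-1 = -1.
Proof.
have p1 := prime_gt1 hp.
rewrite T_fact ?prednK ?ltn_pred ?prime_gt0 //.
have W : (((p.-1)`!).+1%:R : F) = 0 by apply/eqP; rewrite Fp_nat0 -Wilson.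
by apply/eqP; rewrite -addr_eq0 -mulrSr W.
Qed.

Lemma T_p : T p = -1.
Proof.
have p0 := prime_gt0 hp.
have := TS p.-1; rewrite prednK // => ->.
by rewrite T_pm1 pchar_Fp_0 // /cz eqxx mulr1.
Qed.

Lemma T_pplus m : T (p + m) = - T m.
Proof.
rewrite -T_split T_p mulN1r; congr (- _).
rewrite /T; apply: eq_bigr => j _; by rewrite natrD pchar_Fp_0 // add0r.
Qed.

Variable h : nat.
Hypothesis hph : (2 * h).+1 = p.

Lemma conv_plus (i j : nat) : ((2 * i%:Z + j%:Z)%:~R : F) = ((2 * i + j)%N)%:R.
Proof. by rewrite rmorphD rmorphM /= natrD natrM. Qed.

Lemma rowA i : \prod_(1 <= j < h.+1) cz ((2 * i%:Z + j%:Z)%:~R) = T (2 * i + h) / T (2 * i).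
Proof. by rewrite -T_ratio; apply: eq_bigr => j _; rewrite conv_plus. Qed.

Lemma rowB i : \prod_(1 <= j < h.+1) cz ((2 * i%:Z - j%:Z)%:~R) = T (2 * i + h + h) / T (2 * i + h).
Proof.
rewrite -T_ratio big_nat_rev /=; apply: eq_big_nat => j /andP[j1 jh].
congr cz.
have E : (2 * i + h + j = 2 * i + p - (1 + h.+1 - j.+1))%N by lia.
rewrite E natrB; last by lia.
by rewrite natrD pchar_Fp_0 // addr0 rmorphB rmorphM /= natrM.
Qed.

Lemma h_gt0 : (0 < h)%N.
Proof. have := prime_gt1 hp; rewrite -hph; case: h => //. Qed.

Lemma Fermat2 (x : F) : x != 0 -> x ^+ (2 * h) = 1.
Proof.
move=> x0; have E0 := expf_card x; rewrite card_Fp // in E0.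
have E : x * x ^+ (2 * h) = x by rewrite -exprS hph.
by apply: (mulfI x0); rewrite E mulr1.
Qed.

Lemma nat_neq0 k : (0 < k < p)%N -> (k%:R : F) != 0.
Proof. by move=> /andP[k0 kp]; rewrite Fp_nat0 gtnNdvd. Qed.

Lemma natF_inj k l : (k < p)%N -> (l < p)%N -> (k%:R : F) = l%:R -> k = l.
Proof.
move=> kp lp E; have := val_Fp_nat hp k; rewrite E val_Fp_nat // !modn_small //.
Qed.

Lemma sq_root (y : F) : y ^+ h = 1 -> exists2 k, (k < p)%N & y = (k%:R) ^+ 2.
Proof.
move=> yh.
have [/existsP[k /eqP ->]|nE] := boolP [exists k : 'I_p, y == (k : nat)%:R ^+ 2].
  by exists k.
exfalso.
pose rs := y :: [seq ((k%:R : F) ^+ 2) | k <- iota 1 h].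
pose P : {poly F} := 'X^h - 1.
have P0 : P != 0 by rewrite -size_poly_eq0 size_XnsubC // h_gt0.
have kr : forall k, k \in iota 1 h -> (0 < k < p)%N.
  by move=> k; rewrite mem_iota; lia.
have := @max_poly_roots _ P rs P0.
rewrite /= size_map size_iota size_XnsubC ?h_gt0 // ltnn.
move=> H; have H1 := H _ _; move: H1 {H}; move=> H1; apply: (notF (H1 _ _)).
  apply/andP; split; first by rewrite /root !hornerE yh subrr.
  apply/allP => z /mapP[k kin ->]; rewrite /root !hornerE -exprM Fermat2 ?subrr //.
  by apply: nat_neq0; apply: kr.
apply/andP; split.
  apply/negP => /mapP[k kin E]; move/negP: nE; apply; apply/existsP.
  have kp : (k < p)%N by have := kr _ kin; lia.
  by exists (Ordinal kp); rewrite E.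
rewrite map_inj_in_uniq ?iota_uniq // => k l kin lin /eqP.
rewrite -subr_eq0 subr_sqr mulf_eq0 => /orP[|].
  by rewrite subr_eq0 => /eqP E; apply: natF_inj E; [have := kr _ kin | have := kr _ lin]; lia.
rewrite -natrD => E; exfalso; move: E; apply/negP; apply: nat_neq0.
have := kr _ kin; have := kr _ lin; rewrite !mem_iota in kin lin; lia.
Qed.

Lemma euler (a : int) : (a%:~R : F) != 0 -> ((legendre a p)%:~R : F) = (a%:~R) ^+ h.
Proof.
move=> a0; have nd : ~~ (p%:Z %| a)%Z by rewrite -Fp_int0.
rewrite /legendre (negbTE nd).
case: existsP => [[x /eqP Hx]|Hn].
  have := (eqmodF _ _).1 Hx; rewrite rmorphXn /= => Ex.
  rewrite -Ex -exprM Fermat2 //; apply: contraNneq a0 => x0.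
  by rewrite -Ex x0 expr0n.
have Y2 : ((a%:~R : F) ^+ h) ^+ 2 = 1 by rewrite -exprM mulnC Fermat2.
have : ((a%:~R : F) ^+ h - 1) * ((a%:~R : F) ^+ h + 1) = 0 by rewrite -subr_sqr_1 Y2 subrr.
move/eqP; rewrite mulf_eq0 => /orP[|].
  rewrite subr_eq0 => /eqP /sq_root [k kp Ek]; exfalso; apply: Hn.
  exists (Ordinal kp); apply/eqP; apply/eqmodF.
  by rewrite rmorphXn /= -Ek.
by rewrite addr_eq0 => /eqP ->; rewrite rmorphN1.
Qed.

Lemma prodN m n (f : nat -> F) : \prod_(m <= i < n) - f i = (-1) ^+ (n - m) * \prod_(m <= i < n) f i.
Proof. by rewrite -prodr_const_nat -big_split; apply: eq_bigr => i _; rewrite /= mulN1r. Qed.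

Lemma prod2 m : \prod_(1 <= i < m.+1) ((2 * i)%:R : F) = (dfact (2 * m))%:R.
Proof. by have := dfact_add 0 m; rewrite add0n => ->; rewrite mul1n natr_prod. Qed.

Lemma T_even i : (0 < i <= h)%N -> T (2 * i) = T (2 * i).-1 * (2 * i)%:R.
Proof.
move=> Hi; have := TS (2 * i).-1; rewrite prednK; last by lia.
by move=> ->; rewrite cz_nat //; lia.
Qed.

Lemma T_big i : (0 < i)%N -> T (2 * i + h + h) = - T (2 * i).-1.
Proof. by move=> Hi; rewrite (_ : (2 * i + h + h = p + (2 * i).-1)%N) ?T_pplus //; lia. Qed.

Lemma AB_core : \prod_(1 <= i < h.+1) (T (2 * i + h) / T (2 * i) * (T (2 * i + h + h) / T (2 * i + h)))
  = (-1) ^+ h / (dfact (2 * h))%:R.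
Proof.
rewrite -prod2 -prodfV.
have -> : (-1) ^+ h = \prod_(1 <= i < h.+1) (-1 : F) by rewrite prodr_const_nat subn1.
rewrite -big_split; apply: eq_big_nat => i /andP[i1 ih].
have i2 : (0 < i <= h)%N by lia.
rewrite T_big // T_even //.
have n1 := T_neq0 (2 * i + h); have n2 := T_neq0 (2 * i).-1.
have n3 : ((2 * i)%:R : F) != 0 by apply: nat_neq0; lia.
move: n1 n2 n3; set a := T _; set b := T _; set c := _%:R => n1 n2 n3.
rewrite invfM; transitivity ((a / a) * (b / b) * (-1 * c^-1)); first by ring.
by rewrite !divff // !mul1r.
Qed.

Lemma split_shift (f : nat -> F) n m :
  \prod_(1 <= i < (n + m).+1) f i = \prod_(1 <= i < m.+1) f i * \prod_(1 <= i < n.+1) f (i + m).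
Proof.
rewrite (@big_cat_nat _ _ _ m.+1) //=; last by lia.
congr (_ * _); rewrite -{1}(add1n m) big_addn.
by have -> : ((n + m).+1 - m = n.+1)%N by lia.
Qed.

Lemma tele (f : nat -> F) n m :
  \prod_(1 <= i < n.+1) f (i + m) * \prod_(1 <= i < m.+1) f i =
  \prod_(1 <= i < n.+1) f i * \prod_(1 <= i < m.+1) f (i + n).
Proof. by rewrite mulrC -split_shift addnC split_shift. Qed.

Lemma D_neq0 m : (m <= h)%N -> ((dfact (2 * m))%:R : F) != 0.
Proof.
move=> mh; rewrite -prod2 prodf_seq_neq0; apply/allP => i; rewrite mem_index_iota => Hi /=.
by apply: nat_neq0; lia.
Qed.

Lemma G_core m : (m <= h)%N ->
  \prod_(1 <= i < h.+1) T (2 * (i + m)) = (-1) ^+ m * \prod_(1 <= i < h.+1) T (2 * i) / (dfact (2 * m))%:R.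
Proof.
move=> mh; have := tele (fun i => T (2 * i)) h m; rewrite /=.
set Q := \prod_(1 <= i < m.+1) T (2 * i).-1.
have E1 : \prod_(1 <= i < m.+1) T (2 * i) = Q * (dfact (2 * m))%:R.
  rewrite -prod2 -big_split; apply: eq_big_nat => i Hi; rewrite T_even //; lia.
have E2 : \prod_(1 <= i < m.+1) T (2 * (i + h)) = (-1) ^+ m * Q.
  rewrite -[m in (-1) ^+ m](subn1 m.+1) -prodN; apply: eq_big_nat => i Hi.
  rewrite -T_big; last by lia.
  by congr T; lia.
rewrite E1 E2 => E.
have Qn0 : Q != 0 by rewrite prodf_seq_neq0; apply/allP => i _; exact: T_neq0.
have Dn0 := @D_neq0 m mh.
apply: (mulIf Qn0); apply: (mulIf Dn0).
rewrite -mulrA E [in RHS]mulrAC divfK //; ring.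
Qed.

Lemma D1sq : odd h -> ((dfact (2 * h).-1)%:R : F) ^+ 2 = 1.
Proof.
move=> Ho; have h0 := h_gt0.
set R := \prod_(1 <= i < h) ((2 * i)%:R : F).
have D1 : ((dfact (2 * h).-1)%:R : F) = (-1) ^+ (h - 1) * R.
  rewrite (_ : (2 * h).-1 = 1 + 2 * h.-1)%N; last by lia.
  rewrite dfact_add mul1n natr_prod prednK // big_nat_rev /= -prodN.
  apply: eq_big_nat => i Hi.
  rewrite (_ : (1 + 2 * (1 + h - i.+1) = p - 2 * i)%N); last by lia.
  by rewrite natrB ?pchar_Fp_0 ?sub0r //; lia.
have D2 : ((dfact (2 * h))%:R : F) = R * -1.
  rewrite -prod2 big_nat_recr //=; congr (_ * _).
  rewrite (_ : (2 * h = p - 1)%N); last by lia.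
  by rewrite natrB ?pchar_Fp_0 ?sub0r //; lia.
have W : ((dfact (2 * h))%:R : F) * (dfact (2 * h).-1)%:R = -1.
  rewrite -natrM; have := dfact_fact (2 * h).-1; rewrite prednK; last by lia.
  move=> ->; rewrite (_ : (2 * h = p.-1)%N); last by lia.
  by rewrite -T_fact ?T_pm1 //; lia.
have s1 : (-1 : F) ^+ (h - 1) = 1.
  by rewrite -signr_odd oddB // Ho.
move: W; rewrite D1 D2 s1 mul1r mulrN1 mulNr => /eqP; rewrite eqr_opp => /eqP W.
by rewrite expr2.
Qed.

Lemma sgsq m : ((-1 : F) ^+ m) ^+ 2 = 1.
Proof. exact: sqrr_sign. Qed.

Lemma A_sq : ((dfact h)%:R * \prod_(1 <= i < h.+1) (T (2 * i + h) / T (2 * i))) ^+ 2 = (1 : F).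
Proof.
rewrite prodf_div.
set Y := \prod_(1 <= i < h.+1) T (2 * i).
have Yn0 : Y != 0 by rewrite prodf_seq_neq0; apply/allP => i _; exact: T_neq0.
have hm := odd_double_half h; set m := h./2 in hm.
have mh : (m <= h)%N by lia.
have Dn0 := @D_neq0 m mh.
case Ho: (odd h) in hm.
  have E : \prod_(1 <= i < h.+1) T (2 * i + h) =
      \prod_(1 <= i < h.+1) T (2 * (i + m)) * \prod_(1 <= i < h.+1) cz ((2 * i + h)%:R).
    rewrite -big_split; apply: eq_bigr => i _.
    by rewrite (_ : (2 * i + h = (2 * (i + m)).+1)%N) ?TS //; lia.
  have C : \prod_(1 <= i < h.+1) cz ((2 * i + h)%:R) =
      (\prod_(1 <= i < m.+1) (h + 2 * i))%:R * (dfact (2 * m))%:R.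
    have Hs := split_shift (fun i => cz ((2 * i + h)%:R)) m m.+1.
    rewrite (_ : (m + m.+1 = h)%N) in Hs; last by lia.
    rewrite Hs /= big_nat_recr //= -prod2.
    rewrite (_ : (2 * m.+1 + h = p)%N); last by lia.
    rewrite pchar_Fp_0 // (_ : cz 0 = 1) ?mulr1 ?natr_prod; last by rewrite /cz eqxx.
    congr (_ * _).
      apply: eq_big_nat => i Hi; rewrite addnC cz_nat //; lia.
    apply: eq_big_nat => i Hi.
    rewrite (_ : (2 * (i + m.+1) + h = p + 2 * i)%N); last by lia.
    rewrite natrD pchar_Fp_0 // add0r cz_nat //; lia.
  rewrite E G_core // C.
  have -> : (dfact h)%:R * ((-1) ^+ m * Y / (dfact (2 * m))%:R *
      ((\prod_(1 <= i < m.+1) (h + 2 * i))%:R * (dfact (2 * m))%:R) / Y)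
      = (-1) ^+ m * (dfact h * \prod_(1 <= i < m.+1) (h + 2 * i))%:R :> F.
    move: Yn0 Dn0; set D := (dfact _)%:R; set P := (\prod_(_ <= _ < _) _)%:R => Yn0 Dn0.
    rewrite natrM; transitivity ((Y / Y) * (D / D) * ((-1) ^+ m * ((dfact h)%:R * P))); first by ring.
    by rewrite !divff // !mul1r.
  rewrite -dfact_add (_ : (h + 2 * m = (2 * h).-1)%N); last by lia.
  by rewrite exprMn sgsq mul1r D1sq.
have E : \prod_(1 <= i < h.+1) T (2 * i + h) = \prod_(1 <= i < h.+1) T (2 * (i + m)).
  by apply: eq_bigr => i _; congr T; lia.
rewrite E G_core //.
rewrite (_ : dfact h = dfact (2 * m)); last by congr dfact; lia.
move: Dn0; set D := (dfact _)%:R => Dn0.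
rewrite (_ : D * ((-1) ^+ m * Y / D / Y) = (D / D) * (Y / Y) * (-1) ^+ m); last by ring.
by rewrite !divff // !mul1r sgsq.
Qed.


Lemma main_sec :
  let A : int := (dfact h)%:Z *
      \prod_(1 <= i < h.+1) \prod_(1 <= j < h.+1 | ~~ (p%:Z %| (2 * i%:Z + j%:Z))%Z)
          (2 * i%:Z + j%:Z) in
  let B : int := legendre (-2) p * (dfact (p - 3)./2)%:Z *
      \prod_(1 <= i < h.+1) \prod_(1 <= j < h.+1 | ~~ (p%:Z %| (2 * i%:Z - j%:Z))%Z)
          (2 * i%:Z - j%:Z) in
  (A = B %[mod p%:Z])%Z /\
  ((B = 1 %[mod p%:Z])%Z \/ (B = -1 %[mod p%:Z])%Z).
Proof.
move=> A B.
have h0 := h_gt0.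
have EA : (A%:~R : F) = (dfact h)%:R * \prod_(1 <= i < h.+1) (T (2 * i + h) / T (2 * i)).
  rewrite /A rmorphM /= rmorph_prod /=; congr (_ * _); apply: eq_bigr => i _.
  by rewrite (improd _ (fun j => 2 * i%:Z + j%:Z)) rowA.
have EB : (B%:~R : F) = (legendre (-2) p)%:~R * (dfact h.-1)%:R *
     \prod_(1 <= i < h.+1) (T (2 * i + h + h) / T (2 * i + h)).
  rewrite /B rmorphM /= rmorph_prod /= rmorphM /=.
  rewrite (_ : (p - 3)./2 = h.-1)%N; last first.
    rewrite -hph (_ : (2 * h).+1 - 3 = (h.-1).*2)%N; last by lia.
    by rewrite doubleK.
  congr (_ * _); apply: eq_bigr => i _.
  by rewrite (improd _ (fun j => 2 * i%:Z - j%:Z)) rowB.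
have n2 : ((-2 : int)%:~R : F) = - 2%:R by rewrite rmorphN /= rmorph_nat.
have p2 : (2 < p)%N by rewrite -hph; lia.
have n2n0 : ((-2 : int)%:~R : F) != 0 by rewrite n2 oppr_eq0 nat_neq0.
have EL := @euler (-2) n2n0.
have hf0 : (h`!%:R : F) != 0 by rewrite -T_fact ?T_neq0 //; lia.
have t0 : ((2 ^ h)%:R : F) != 0 by rewrite natrX expf_neq0 // nat_neq0.
have AB : (A%:~R : F) * B%:~R = 1.
  rewrite EA EB EL n2.
  set X := \prod_(_ <= _ < _) _; set Y := \prod_(_ <= _ < _) _.
  have XY := AB_core.
  rewrite big_split /= -/X -/Y dfact_even natrM in XY.
  have DD : ((dfact h)%:R * (dfact h.-1)%:R : F) = h`!%:R.
    by have := dfact_fact h.-1; rewrite prednK // => <-; rewrite natrM.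
  move: hf0 t0 DD XY; set u := (h`!)%:R; set v := (2 ^ h)%:R; set d1 := (dfact h)%:R; set d2 := (dfact h.-1)%:R.
  move=> hf0 t0 DD XY.
  have -> : d1 * X * ((- 2%:R) ^+ h * d2 * Y) = (- 2%:R) ^+ h * (d1 * d2) * (X * Y) by ring.
  rewrite DD XY (_ : - 2%:R = (-1) * 2%:R :> F); last by rewrite mulN1r.
  rewrite exprMn -natrX -/v.
  have -> : (-1) ^+ h * v * u * ((-1) ^+ h / (v * u)) = ((-1) ^+ h) ^+ 2 * ((v * u) / (v * u)) by ring.
  by rewrite sqrr_sign divff ?mulr1 // mulf_neq0.
have Asq := A_sq; rewrite -EA in Asq.
have BA : (B%:~R : F) = A%:~R.
  transitivity ((A%:~R : F) * (A%:~R * B%:~R)); last by rewrite AB mulr1.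
  by rewrite mulrA -expr2 Asq mul1r.
split; first by apply/eqmodF.
have : ((B%:~R : F) - 1) * (B%:~R + 1) = 0 by rewrite -subr_sqr_1 BA Asq subrr.
move/eqP; rewrite mulf_eq0 => /orP[|].
  by rewrite subr_eq0 => /eqP E; left; apply/eqmodF; rewrite E rmorph1.
by rewrite addr_eq0 => /eqP E; right; apply/eqmodF; rewrite E rmorphN1.
Qed.
End Main.

Theorem lemma6p1 (p : nat) (hp : prime p) (hp3 : (3 < p)%N) :
  let h := p.-1./2 in
  let A : int := (dfact h)%:Z *
      \prod_(1 <= i < h.+1) \prod_(1 <= j < h.+1 | ~~ (p%:Z %| (2 * i%:Z + j%:Z))%Z)
          (2 * i%:Z + j%:Z) in
  let B : int := legendre (-2) p * (dfact (p - 3)./2)%:Z *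
      \prod_(1 <= i < h.+1) \prod_(1 <= j < h.+1 | ~~ (p%:Z %| (2 * i%:Z - j%:Z))%Z)
          (2 * i%:Z - j%:Z) in
  (A = B %[mod p%:Z])%Z /\
  ((B = 1 %[mod p%:Z])%Z \/ (B = -1 %[mod p%:Z])%Z).
Proof.
move=> h.
have op : odd p by case: (even_prime hp) => // p2; rewrite p2 in hp3.
have hph : (2 * h).+1 = p.
  have e := odd_double_half p.-1; rewrite -/h in e.
  have o : odd p.-1 = false by rewrite -subn1 oddB ?op // prime_gt0.
  rewrite o in e; have := prime_gt0 hp; lia.
exact (@main_sec p hp h hph).
Qed.
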